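(* Let $p<1$, let $k$ be an integer, and let $Y$ be the number of vertices of degree at most $k$ in $\mathcal G(n,p)$. Then $\operatorname{Var}(Y)\le(\mathbb E Y)^2\big(p/(1-p)+1/\mathbb E Y\big)$.
   Context: $\mathcal G(n,p)$ is the Erdős–Rényi random graph on $[n]$, each edge present independently with probability $p$. *)

(* Defs.v *)
From mathcomp Require Import all_boot all_order all_algebra.
Set Implicit Arguments. Unset Strict Implicit. Unset Printing Implicit Defensive.
Import Order.TTheory GRing.Theory Num.Theory.

(* Unordered pairs {u,v} of distinct vertices of [n] = 'I_n, encoded as (u,v) with u < v. *)
Definition pair_t (n : nat) := {x : 'I_n * 'I_n | (x.1 < x.2)%N}.

Definition graph (n : nat) := {set pair_t n}.

Definition adj (n : nat) (G : graph n) (u v : 'I_n) : bool :=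
  [exists e in G, (((val e).1 == u) && ((val e).2 == v))
                || (((val e).1 == v) && ((val e).2 == u))].

Definition deg (n : nat) (G : graph n) (v : 'I_n) : nat := #|[set u | adj G u v]|.

Local Open Scope ring_scope.

(* Probability of the graph G in G(n,p): each of the C(n,2) edges present independently w.p. p. *)
Definition gnp_prob (R : nzRingType) (n : nat) (p : R) (G : graph n) : R :=
  p ^+ #|G| * (1 - p) ^+ (#|[set: pair_t n]| - #|G|)%N.

Definition gnp_expect (R : nzRingType) (n : nat) (p : R) (X : graph n -> R) : R :=
  \sum_(G : graph n) gnp_prob p G * X G.

Definition gnp_var (R : nzRingType) (n : nat) (p : R) (X : graph n -> R) : R :=
  gnp_expect p (fun G => (X G - gnp_expect p X) ^+ 2).

Definition Ylow (n : nat) (k : int) (G : graph n) : nat :=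
  #|[set v : 'I_n | ((deg G v)%:Z <= k)%R]|.

(* Main.v *)
Require Import Defs.
From mathcomp Require Import all_boot all_order all_algebra.
Set Implicit Arguments. Unset Strict Implicit. Unset Printing Implicit Defensive.
Import Order.TTheory GRing.Theory Num.Theory.
Local Open Scope ring_scope.

Definition wt (R : nzRingType) (p : R) (b : bool) : R := if b then p else 1 - p.

Lemma prob_prod (R : comNzRingType) n (p : R) (G : graph n) :
  gnp_prob p G = \prod_(e : pair_t n) wt p (e \in G).
Proof.
rewrite /gnp_prob (bigID (mem G)) /=; symmetry.
rewrite (eq_bigr (fun=> p)); last by move=> e ->.
rewrite [X in _ * X](eq_bigr (fun=> 1 - p)); last by move=> e /negbTE ->.
rewrite !prodr_const; congr (_ * _ ^+ _).
rewrite cardsT -(cardC (mem G)) addKn.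
by apply: eq_card => e; rewrite !inE.
Qed.

Lemma sum_prod (R : comNzRingType) n (F : pair_t n -> bool -> R) :
  \sum_(G : graph n) \prod_(e : pair_t n) F e (e \in G)
  = \prod_(e : pair_t n) (F e true + F e false).
Proof.
rewrite (eq_bigr (fun e => \sum_(b : bool) F e b)); last by move=> e _; rewrite big_bool.
rewrite bigA_distr_bigA /=.
rewrite (reindex (fun f : {ffun pair_t n -> bool} => [set x | f x])) /=.
  apply: eq_bigr => f _; apply: eq_bigr => e _; by rewrite inE.
exists (fun G : graph n => [ffun x => x \in G]) => [f _|G _].
  by apply/ffunP => x; rewrite ffunE inE.
by apply/setP => x; rewrite !inE ffunE.
Qed.

Lemma mass1 (R : comNzRingType) n (p : R) :
  \sum_(G : graph n) gnp_prob p G = 1.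
Proof.
rewrite (eq_bigr _ (fun G _ => prob_prod p G)) (sum_prod (fun _ b => wt p b)) /wt.
by apply: big1 => e _; rewrite addrC subrK.
Qed.

Lemma E_add (R : comNzRingType) n (p : R) (f g : graph n -> R) :
  gnp_expect p (fun G => f G + g G) = gnp_expect p f + gnp_expect p g.
Proof. by rewrite /gnp_expect -big_split; apply: eq_bigr => G _; rewrite mulrDr. Qed.

Lemma E_scale (R : comNzRingType) n (p : R) c (f : graph n -> R) :
  gnp_expect p (fun G => c * f G) = c * gnp_expect p f.
Proof. by rewrite /gnp_expect mulr_sumr; apply: eq_bigr => G _; rewrite mulrCA. Qed.

Lemma E_const (R : comNzRingType) n (p : R) c :
  gnp_expect p (fun G : graph n => c) = c.
Proof. by rewrite /gnp_expect -mulr_suml mass1 mul1r. Qed.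

Lemma E_sum (R : comNzRingType) n (p : R) (I : finType) (f : I -> graph n -> R) :
  gnp_expect p (fun G => \sum_i f i G) = \sum_i gnp_expect p (f i).
Proof.
rewrite /gnp_expect exchange_big /=; apply: eq_bigr => G _; by rewrite mulr_sumr.
Qed.

Lemma E_ext (R : comNzRingType) n (p : R) (f g : graph n -> R) :
  (forall G, f G = g G) -> gnp_expect p f = gnp_expect p g.
Proof. by move=> h; rewrite /gnp_expect; apply: eq_bigr => G _; rewrite h. Qed.

Lemma prob_ge0 (R : numDomainType) n (p : R) (G : graph n) :
  0 <= p -> p <= 1 -> 0 <= gnp_prob p G.
Proof. by move=> h0 h1; rewrite /gnp_prob mulr_ge0 // exprn_ge0 // subr_ge0. Qed.

Lemma E_le (R : numDomainType) n (p : R) (f g : graph n -> R) :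
  0 <= p -> p <= 1 -> (forall G, f G <= g G) -> gnp_expect p f <= gnp_expect p g.
Proof.
move=> h0 h1 h; rewrite /gnp_expect; apply: ler_sum => G _.
by apply: ler_wpM2l; [exact: prob_ge0|exact: h].
Qed.

Definition swp n (S : {set pair_t n}) (x : graph n * graph n) : graph n * graph n :=
  ((x.1 :&: S) :|: (x.2 :&: ~: S), (x.2 :&: S) :|: (x.1 :&: ~: S)).

Lemma swpK n (S : {set pair_t n}) : involutive (swp S).
Proof.
case=> G H; rewrite /swp /=; congr pair; apply/setP => e; rewrite !inE;
  by case: (e \in S); case: (e \in G); case: (e \in H).
Qed.

Lemma indep (R : comNzRingType) n (p : R) (S : {set pair_t n}) (f g : graph n -> R) :
  (forall G, f G = f (G :&: S)) -> (forall G, g G = g (G :&: ~: S)) ->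
  gnp_expect p (fun G => f G * g G) = gnp_expect p f * gnp_expect p g.
Proof.
move=> hf hg.
have -> : gnp_expect p (fun G => f G * g G) =
   \sum_(x : graph n * graph n) gnp_prob p x.1 * gnp_prob p x.2 * (f x.1 * g x.1).
  rewrite -(pair_bigA _ (fun G H => gnp_prob p G * gnp_prob p H * (f G * g G))) /=.
  rewrite /gnp_expect; apply: eq_bigr => G _.
  by rewrite -mulr_suml -mulr_sumr mass1 mulr1.
have -> : gnp_expect p f * gnp_expect p g =
   \sum_(x : graph n * graph n) gnp_prob p x.1 * gnp_prob p x.2 * (f x.1 * g x.2).
  rewrite -(pair_bigA _ (fun G H => gnp_prob p G * gnp_prob p H * (f G * g H))) /=.
  rewrite /gnp_expect mulr_suml; apply: eq_bigr => G _.
  rewrite mulr_sumr; apply: eq_bigr => H _.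
  by rewrite mulrACA.
rewrite (reindex_inj (inv_inj (swpK S))) /=; apply: eq_bigr => -[G H] _ /=.
congr (_ * (_ * _)).
- rewrite !prob_prod -!big_split /=; apply: eq_bigr => e _; rewrite !inE.
  by case: (e \in S); rewrite ?andbT ?andbF ?orbF /= // mulrC.
- rewrite hf [RHS]hf; congr f; apply/setP => e; rewrite !inE.
  by case: (e \in S); case: (e \in G); case: (e \in H).
- rewrite hg [RHS]hg; congr g; apply/setP => e; rewrite !inE.
  by case: (e \in S); case: (e \in G); case: (e \in H).
Qed.

Definition Eu n (u : 'I_n) : {set pair_t n} :=
  [set e : pair_t n | ((val e).1 == u) || ((val e).2 == u)].

Definition other n (u : 'I_n) (e : pair_t n) : 'I_n :=
  if (val e).1 == u then (val e).2 else (val e).1.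

Lemma other_inj n (u : 'I_n) : {in Eu u &, injective (other u)}.
Proof.
move=> [[a1 b1] h1] [[a2 b2] h2]; rewrite !inE /other /= => H1 H2 E.
apply: val_inj => /=; move: h1 h2 => /= l1 l2.
case: (eqVneq a1 u) H1 E => [e1 _|n1 /= /eqP e1];
case: (eqVneq a2 u) H2 => [e2 _|n2 /= /eqP e2] /= E.
- by rewrite e1 e2 E.
- move: l1 l2; rewrite e1 e2 E => l1 l2.
  by have := ltn_trans l1 l2; rewrite ltnn.
- move: l1 l2; rewrite e1 e2 -E => l1 l2.
  by have := ltn_trans l1 l2; rewrite ltnn.
- by rewrite e1 e2 E.
Qed.

Lemma deg_card n (G : graph n) (u : 'I_n) : deg G u = #|G :&: Eu u|.
Proof.
rewrite /deg -(card_in_imset (f := other u)); last first.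
  by apply: sub_in2 (@other_inj n u) => e; rewrite inE => /andP[].
apply: eq_card => w; rewrite !inE; apply/idP/imsetP.
- case/existsP => e /andP[eG /orP[/andP[/eqP e1 /eqP e2]|/andP[/eqP e1 /eqP e2]]].
  + exists e; first by rewrite !inE eG e2 eqxx orbT.
    rewrite /other e1; case: eqP => // wu.
    by have := valP e; rewrite e1 e2 wu ltnn.
  + exists e; first by rewrite !inE eG e1 eqxx.
    by rewrite /other e1 eqxx.
- case=> e; rewrite !inE => /andP[eG He] ->; apply/existsP; exists e.
  rewrite eG /= /other; case E1: ((val e).1 == u); first by rewrite !eqxx orbT.
  by move: He; rewrite E1 /= => ->; rewrite eqxx.
Qed.

Lemma E_c1 (R : comNzRingType) n (p : R) (e0 : pair_t n) :
  gnp_expect p (fun G : graph n => (e0 \in G)%:R) = p.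
Proof.
rewrite /gnp_expect.
rewrite (eq_bigr (fun G : graph n => \prod_e (wt p (e \in G) *
           (if e == e0 then (e \in G)%:R else 1)))); last first.
  move=> G _; rewrite prob_prod big_split /=; congr (_ * _).
  rewrite (bigD1 e0) //= eqxx big1 ?mulr1 // => e /negbTE -> //.
rewrite (sum_prod (fun e b => wt p b * (if e == e0 then b%:R else 1))) /wt.
rewrite (bigD1 e0) //= eqxx mulr1 mulr0 addr0 big1 ?mulr1 // => e /negbTE ->.
by rewrite !mulr1 addrC subrK.
Qed.

Lemma E_c0 (R : comNzRingType) n (p : R) (e0 : pair_t n) :
  gnp_expect p (fun G : graph n => (e0 \notin G)%:R) = 1 - p.
Proof.
transitivity (gnp_expect p (fun G : graph n => 1 + (-1) * (e0 \in G)%:R)).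
  by apply: E_ext => G; case: (e0 \in G); rewrite /= ?mulr1 ?mulr0 ?addr0 ?subrr.
by rewrite E_add E_scale E_const E_c1 mulN1r.
Qed.

Definition aS {R : nzRingType} n (k : int) (S : {set pair_t n}) (G : graph n) : R :=
  (((#|G :&: S|)%:Z <= k)%R)%:R.

Lemma aS_restr (R : nzRingType) n k (S Y : {set pair_t n}) G :
  S \subset Y -> aS k S G = aS k S (G :&: Y) :> R.
Proof. by move=> h; rewrite /aS -setIA (setIidPr h). Qed.

Definition e0 n (u v : 'I_n) (h : (u < v)%N) : pair_t n :=
  exist (fun x : 'I_n * 'I_n => (x.1 < x.2)%N) (u, v) h.

Lemma e0_Eu n (u v : 'I_n) (h : (u < v)%N) : e0 h \in Eu u.
Proof. by rewrite inE eqxx. Qed.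

Lemma e0_Ev n (u v : 'I_n) (h : (u < v)%N) : e0 h \in Eu v.
Proof. by rewrite inE eqxx orbT. Qed.

Lemma EuI n (u v : 'I_n) (h : (u < v)%N) e :
  e \in Eu u -> e \in Eu v -> e = e0 h.
Proof.
case: e => [[a b] l]; rewrite !inE /= => Hu Hv; apply: val_inj => /=.
move: l Hu Hv => /= l.
case: (eqVneq a u) => [au _|nau /= /eqP bu].
  case: (eqVneq a v) => [av _|nav /= /eqP bv].
    by move: h; rewrite -au -av ltnn.
  by rewrite au bv.
case: (eqVneq a v) => [av _|nav /= /eqP bv].
  by move: h l; rewrite -bu -av => h l; have := ltn_trans h l; rewrite ltnn.
by move: h; rewrite -bu -bv ltnn.
Qed.

Lemma deg_split n (G : graph n) (w : 'I_n) (f : pair_t n) :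
  f \in Eu w -> deg G w = ((f \in G) + #|G :&: (Eu w :\ f)|)%N.
Proof.
move=> hf; rewrite deg_card (cardsD1 f) inE hf andbT; congr (_ + _)%N.
by apply: eq_card => e; rewrite !inE andbCA.
Qed.

Definition Ind {R : nzRingType} n (k : int) (w : 'I_n) (G : graph n) : R :=
  (((deg G w)%:Z <= k)%R)%:R.

Lemma I_split (R : nzRingType) n k (w : 'I_n) (f : pair_t n) G :
  f \in Eu w ->
  Ind k w G = (f \in G)%:R * aS (k - 1) (Eu w :\ f) G
            + (f \notin G)%:R * aS k (Eu w :\ f) G :> R.
Proof.
move=> hf; rewrite /Ind (deg_split G hf) /aS.
case: (f \in G) => /=; rewrite ?mul1r ?mul0r ?addr0 ?add0r //.
by rewrite PoszD addrC lerBrDr.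
Qed.

Lemma aS_ge0 (R : numDomainType) n k (S : {set pair_t n}) G : 0 <= aS k S G :> R.
Proof. by rewrite /aS ler0n. Qed.

Lemma aS_le1 (R : numDomainType) n k (S : {set pair_t n}) G : aS (k - 1) S G <= aS k S G :> R.
Proof.
rewrite /aS; case h: ((#|G :&: S|)%:Z <= k - 1)%R; last by rewrite ler0n.
suff -> : ((#|G :&: S|)%:Z <= k)%R by [].
by apply: le_trans h _; rewrite lerBlDr lerDl.
Qed.

Lemma notin_compl n (f : pair_t n) (S : {set pair_t n}) : (S :\ f) \subset ~: [set f].
Proof. by apply/subsetP => e; rewrite !inE => /andP[]. Qed.

Lemma E_ge0 (R : numDomainType) n (p : R) (f : graph n -> R) :
  0 <= p -> p <= 1 -> (forall G, 0 <= f G) -> 0 <= gnp_expect p f.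
Proof.
move=> h0 h1 h; rewrite /gnp_expect; apply: sumr_ge0 => G _.
by apply: mulr_ge0; [exact: prob_ge0|exact: h].
Qed.

Lemma E_Ind (R : comNzRingType) n (p : R) k (w : 'I_n) (f : pair_t n) :
  f \in Eu w ->
  gnp_expect p (fun G => Ind k w G) =
  p * gnp_expect p (aS (k - 1) (Eu w :\ f)) + (1 - p) * gnp_expect p (aS k (Eu w :\ f)).
Proof.
move=> hf; rewrite (E_ext p (fun G => I_split R k G hf)) E_add.
rewrite (@indep _ _ p [set f] (fun G => (f \in G)%:R)); first last.
- by move=> G; apply: aS_restr; apply: notin_compl.
- by move=> G; rewrite !inE eqxx andbT.
rewrite (@indep _ _ p [set f] (fun G => (f \notin G)%:R)); first last.
- by move=> G; apply: aS_restr; apply: notin_compl.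
- by move=> G; rewrite !inE eqxx andbT.
by rewrite E_c1 E_c0.
Qed.

Lemma disj n (u v : 'I_n) (h : (u < v)%N) :
  (Eu v :\ e0 h) \subset ~: (Eu u :\ e0 h).
Proof.
apply/subsetP => e; rewrite !inE => /andP[ne ev]; apply/negP => /andP[_ eu].
by move: ne; rewrite (EuI h (e:=e)) ?eqxx // inE.
Qed.

Lemma E_Ind2 (R : comNzRingType) n (p : R) k (u v : 'I_n) (h : (u < v)%N) :
  gnp_expect p (fun G => Ind k u G * Ind k v G) =
  p * (gnp_expect p (aS (k - 1) (Eu u :\ e0 h)) * gnp_expect p (aS (k - 1) (Eu v :\ e0 h)))
  + (1 - p) * (gnp_expect p (aS k (Eu u :\ e0 h)) * gnp_expect p (aS k (Eu v :\ e0 h))).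
Proof.
set f := e0 h.
have hu : f \in Eu u by exact: e0_Eu.
have hv : f \in Eu v by exact: e0_Ev.
have hd := disj h.
rewrite (E_ext p (g := fun G => (f \in G)%:R * (aS (k - 1) (Eu u :\ f) G * aS (k - 1) (Eu v :\ f) G)
   + (f \notin G)%:R * (aS k (Eu u :\ f) G * aS k (Eu v :\ f) G))); last first.
  move=> G; rewrite (I_split R k G hu) (I_split R k G hv).
  by case: (f \in G); rewrite /= ?mul1r ?mul0r ?addr0 ?add0r.
rewrite E_add.
have hg : forall k1, forall G, aS k1 (Eu u :\ f) G * aS k1 (Eu v :\ f) G =
   aS k1 (Eu u :\ f) (G :&: ~: [set f]) * aS k1 (Eu v :\ f) (G :&: ~: [set f]) :> R.
  by move=> k1 G; rewrite -!aS_restr //; apply: notin_compl.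
rewrite (@indep _ _ p [set f] (fun G => (f \in G)%:R)); first last.
- exact: hg.
- by move=> G; rewrite !inE eqxx andbT.
rewrite (@indep _ _ p [set f] (fun G => (f \notin G)%:R)); first last.
- exact: hg.
- by move=> G; rewrite !inE eqxx andbT.
rewrite E_c1 E_c0.
rewrite !(@indep _ _ p (Eu u :\ f)) //.
- by move=> G; apply: aS_restr.
- by move=> G; apply: aS_restr.
- by move=> G; apply: aS_restr.
- by move=> G; apply: aS_restr.
Qed.

From mathcomp Require Import ring.

Lemma key (R : realFieldType) n (p : R) k (u v : 'I_n) (h : (u < v)%N) :
  0 <= p -> p < 1 ->
  (1 - p) * gnp_expect p (fun G => Ind k u G * Ind k v G)
  <= gnp_expect p (fun G => Ind k u G) * gnp_expect p (fun G => Ind k v G).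
Proof.
move=> h0 h1; have h1' := ltW h1.
rewrite E_Ind2 (E_Ind p k (e0_Eu h)) (E_Ind p k (e0_Ev h)).
set A' := gnp_expect p (aS (k - 1) _).
set B' := gnp_expect p (aS (k - 1) _).
set A := gnp_expect p (aS k _).
set B := gnp_expect p (aS k _).
have hA' : 0 <= A' by apply: E_ge0 => // G; apply: aS_ge0.
have hB' : 0 <= B' by apply: E_ge0 => // G; apply: aS_ge0.
have hAA : A' <= A by apply: E_le => // G; apply: aS_le1.
have hBB : B' <= B by apply: E_le => // G; apply: aS_le1.
have hq : 0 <= 1 - p by rewrite subr_ge0.
rewrite -subr_ge0.
have -> : (p * A' + (1 - p) * A) * (p * B' + (1 - p) * B) -
   (1 - p) * (p * (A' * B') + (1 - p) * (A * B))
   = p * p * (A' * B') + p * (1 - p) * (A' * B + B' * (A - A')) by ring.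
apply: addr_ge0; first by rewrite !mulr_ge0.
apply: mulr_ge0; first by rewrite mulr_ge0.
apply: addr_ge0; apply: mulr_ge0 => //; last by rewrite subr_ge0.
exact: le_trans hB' hBB.
Qed.

Lemma key2 (R : realFieldType) n (p : R) k (u v : 'I_n) :
  0 <= p -> p < 1 -> u != v ->
  gnp_expect p (fun G => Ind k u G * Ind k v G)
  <= gnp_expect p (fun G => Ind k u G) * gnp_expect p (fun G => Ind k v G) / (1 - p).
Proof.
move=> h0 h1 huv; rewrite ler_pdivlMr ?subr_gt0 // mulrC.
case: (ltngtP u v) huv => [h|h|/val_inj ->] //; first by move=> _; exact: key.
move=> _; rewrite [X in _ <= X]mulrC (E_ext p (g := fun G => Ind k v G * Ind k u G)).
  exact: key.
by move=> G; rewrite mulrC.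
by rewrite eqxx.
Qed.

Lemma Ylow_sum (R : nzRingType) n k (G : graph n) :
  (Ylow k G)%:R = \sum_(u : 'I_n) Ind k u G :> R.
Proof.
rewrite /Ylow -sum1_card natr_sum big_mkcond /=; apply: eq_bigr => u _.
by rewrite inE /Ind; case: ifP.
Qed.

Lemma Ind_sq (R : nzRingType) n k (u : 'I_n) (G : graph n) :
  Ind k u G * Ind k u G = Ind k u G :> R.
Proof. by rewrite /Ind; case: (_ <= _)%R; rewrite ?mulr1 ?mulr0. Qed.

Unset Implicit Arguments.

Theorem lemma4p6 (R : realFieldType) (n : nat) (p : R) (k : int) :
  0 <= p -> p < 1 ->
  gnp_var p (fun G : graph n => (Ylow k G)%:R)
    <= (gnp_expect p (fun G : graph n => (Ylow k G)%:R)) ^+ 2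
       * (p / (1 - p) + 1 / gnp_expect p (fun G : graph n => (Ylow k G)%:R)).
Proof.
move=> h0 h1; have h1' := ltW h1.
have hq : 0 < 1 - p by rewrite subr_gt0.
set m := gnp_expect p _.
have hm : m = \sum_(u : 'I_n) gnp_expect p (fun G => Ind k u G).
  by rewrite /m (E_ext p (fun G => Ylow_sum R k G)) E_sum.
have hvar : gnp_var p (fun G : graph n => (Ylow k G)%:R) =
    \sum_(u : 'I_n) \sum_(v : 'I_n) gnp_expect p (fun G => Ind k u G * Ind k v G) - m ^+ 2.
  rewrite /gnp_var -/m.
  rewrite (E_ext p (g := fun G => (\sum_(u : 'I_n) \sum_(v : 'I_n) Ind k u G * Ind k v G)
       + ((-2 * m) * (Ylow k G)%:R + m ^+ 2))); last first.
    move=> G; set y := (Ylow k G)%:R.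
    have -> : \sum_(u : 'I_n) \sum_(v : 'I_n) Ind k u G * Ind k v G = y * y :> R.
      by rewrite /y Ylow_sum mulr_suml; apply: eq_bigr => u _; rewrite mulr_sumr.
    ring.
  rewrite E_add E_add E_scale E_const -/m E_sum.
  rewrite (eq_bigr (fun u => \sum_(v : 'I_n) gnp_expect p (fun G => Ind k u G * Ind k v G))).
    ring.
  by move=> u _; rewrite E_sum.
rewrite hvar.
have hP : forall u : 'I_n, 0 <= gnp_expect p (fun G => Ind k u G).
  by move=> u; apply: E_ge0 => // G; rewrite /Ind ler0n.
have hbound : \sum_(u : 'I_n) \sum_(v : 'I_n) gnp_expect p (fun G => Ind k u G * Ind k v G)
    <= m + m ^+ 2 / (1 - p).
  rewrite hm expr2 !mulr_suml -big_split /=.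
  apply: ler_sum => u _.
  rewrite [X in X <= _](bigD1 u) //= (E_ext p (fun G => Ind_sq R k u G)) lerD2l.
  rewrite mulr_sumr mulr_suml.
  apply: le_trans (_ : \sum_(v : 'I_n | v != u) gnp_expect p (fun G => Ind k u G)
             * gnp_expect p (fun G => Ind k v G) / (1 - p) <= _).
    by apply: ler_sum => v hv; apply: key2 => //; rewrite eq_sym.
  rewrite [X in _ <= X](bigD1 u) //= lerDr.
  by apply: mulr_ge0; [apply: mulr_ge0|rewrite invr_ge0 ltW].
have hmm : m ^+ 2 * (1 / m) = m.
  have [->|mz] := eqVneq m 0; first by rewrite expr0n /= mul0r.
  by rewrite expr2 div1r mulrK // unitfE.
rewrite mulrDr hmm.
apply: le_trans (_ : m + m ^+ 2 / (1 - p) - m ^+ 2 <= _).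
  by rewrite lerD2r.
have -> : m + m ^+ 2 / (1 - p) - m ^+ 2 = m ^+ 2 * (p / (1 - p)) + m.
  by field; rewrite subr_eq0 eq_sym lt_eqF.
by [].
Qed.
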